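(* Let $n$ be a positive integer, let $\mathcal F$ be an $\mathcal N$-saturated family of subsets of $[n]$, and let $\mathcal G$ be a component of $\mathcal F$. Let $B_1,\dots,B_l$ be the minimal elements and $A_1,\dots,A_k$ the maximal elements of $\mathcal G$. Let $M\in\mathcal F$ be such that $\bigcup_{i=1}^l B_i\subseteq M\subseteq\bigcap_{i=1}^k A_i$, and such that $M$ is minimal (with respect to inclusion) among the sets of $\mathcal F$ with this property. Then every $X\in\mathcal G$ is comparable to $M$.
   Context: The poset $\mathcal N$ has four elements $a,b,c,d$ with $a<c$, $b<c$, $b<d$ and no other comparabilities. A family $\mathcal Q$ of sets (ordered by inclusion) contains an induced copy of $\mathcal N$ if there are distinct sets in $\mathcal Q$ whose inclusion relations are exactly those of $a,b,c,d$ above. A family $\mathcal F$ of subsets of $[n]=\{1,\dots,n\}$ is $\mathcal N$-saturated if $\mathcal F$ contains no induced copy of $\mathcal N$, but for every $S\subseteq[n]$ with $S\notin\mathcal F$, the family $\mathcal F\cup\{S\}$ contains an induced copy of $\mathcal N$. A component of $\mathcal F$ is the vertex set of a connected component of the Hasse diagram (as a graph) of the poset $(\mathcal F\setminus\{\emptyset,[n]\},\subseteq)$; its minimal and maximal elements are taken with respect to inclusion within the component. *)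

(* Defs.v *)
From mathcomp Require Import all_boot.
Set Implicit Arguments. Unset Strict Implicit. Unset Printing Implicit Defensive.

Section NSat.
Variable T : finType.
Implicit Types (Q F : {set {set T}}) (a b c d X Y : {set T}).

Definition incomparable a b := ~~ (a \subset b) && ~~ (b \subset a).

Definition has_induced_N Q : Prop :=
  exists a b c d,
    [/\ [&& a \in Q, b \in Q, c \in Q & d \in Q],
        uniq [:: a; b; c; d],
        [&& a \proper c, b \proper c & b \proper d] &
        [&& incomparable a b, incomparable a d & incomparable c d]].

(* N-saturated (ground set = all of T) *)
Definition N_saturated F : Prop :=
  ~ has_induced_N F /\
  forall S : {set T}, S \notin F -> has_induced_N (S |: F).

Definition Fcore F := F :\: [set set0; setT].

Definition covers F X Y :=
  [&& X \in Fcore F, Y \in Fcore F, X \proper Y &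
      [forall Z in Fcore F, ~~ ((X \proper Z) && (Z \proper Y))]].
Definition hasse_adj F : rel {set T} :=
  fun X Y => covers F X Y || covers F Y X.

Definition is_component F (G : {set {set T}}) : Prop :=
  exists2 X0, X0 \in Fcore F & G = [set Y | connect (hasse_adj F) X0 Y].

Definition minimal_in (G : {set {set T}}) X := (X \in G) && [forall C in G, ~~ (C \proper X)].
Definition maximal_in (G : {set {set T}}) X := (X \in G) && [forall C in G, ~~ (X \proper C)].

Definition bigcup_min (G : {set {set T}}) := \bigcup_(B | minimal_in G B) B.
Definition bigcap_max (G : {set {set T}}) := \bigcap_(A | maximal_in G A) A.

End NSat.

(* Main.v *)
Require Import Defs.
From mathcomp Require Import all_boot.
From mathcomp Require Import zify.
Set Implicit Arguments. Unset Strict Implicit. Unset Printing Implicit Defensive.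

Section Proof.
Variable T : finType.
Variable F : {set {set T}}.
Implicit Types (X Y Z W S P Q a b c d : {set T}).

Lemma hasse_sym : symmetric (hasse_adj F).
Proof. by move=> x y; rewrite /hasse_adj orbC. Qed.

Lemma inc_sym X Y : incomparable X Y = incomparable Y X.
Proof. by rewrite /incomparable andbC. Qed.

Lemma inc_ne X Y : incomparable X Y -> X != Y.
Proof. by apply: contraTneq => ->; rewrite /incomparable subxx. Qed.

Lemma proper_ne X Y : X \proper Y -> X != Y.
Proof. by apply: contraTneq => ->; rewrite properE subxx. Qed.

Lemma mkN a b c d : a \in F -> b \in F -> c \in F -> d \in F ->
  a \proper c -> b \proper c -> b \proper d ->
  incomparable a b -> incomparable a d -> incomparable c d -> has_induced_N F.
Proof.
move=> ha hb hc hd ac bc bd iab iad icd.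
exists a, b, c, d; split.
- by rewrite ha hb hc hd.
- rewrite /= !inE; move: (inc_ne iab) (proper_ne ac) (inc_ne iad) (proper_ne bc)
     (proper_ne bd) (inc_ne icd); do 6! move=> /negbTE ->; done.
- by rewrite ac bc bd.
- by rewrite iab iad icd.
Qed.

Lemma comp_connect k Y W : #|W| - #|Y| <= k -> Y \in Fcore F -> W \in Fcore F ->
  Y \proper W -> connect (hasse_adj F) Y W.
Proof.
elim: k Y W => [|k IH] Y W hk hY hW hYW.
  have := proper_card hYW; lia.
case: (boolP [forall Z in Fcore F, ~~ ((Y \proper Z) && (Z \proper W))]) => h.
  by apply: connect1; rewrite /hasse_adj /covers hY hW hYW h.
move/forall_inPn: h => [Z hZ /negbNE /andP [h1 h2]].
have c1 := proper_card h1; have c2 := proper_card h2.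
apply: (connect_trans (y:=Z)); apply: IH => //; lia.
Qed.

Variable G : {set {set T}}.
Variable X0 : {set T}.
Hypothesis hX0 : X0 \in Fcore F.
Hypothesis hG : G = [set Y | connect (hasse_adj F) X0 Y].

Lemma G_Fcore Y : Y \in G -> Y \in Fcore F.
Proof.
rewrite hG inE => hc.
have cl : closed (hasse_adj F) (Fcore F).
  move=> x y; rewrite /hasse_adj /covers => /orP [] /and4P [hx hy _ _].
  - by rewrite [x \in _]hx [y \in _]hy.
  - by rewrite [x \in _]hy [y \in _]hx.
by rewrite -(closed_connect cl hc).
Qed.

Lemma Fcore_F Y : Y \in Fcore F -> Y \in F.
Proof. by rewrite /Fcore inE => /andP []. Qed.

Lemma G_comp Y W : Y \in Fcore F -> W \in Fcore F -> Y \subset W ->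
  (Y \in G) = (W \in G).
Proof.
move=> hY hW hs; case: (eqVneq Y W) => [->//|ne].
have hp : Y \proper W by rewrite properE hs /=; apply: contra ne => h; rewrite eqEsubset hs h.
have cn := comp_connect (leqnn _) hY hW hp.
rewrite hG !inE; apply/idP/idP => h.
  exact: connect_trans h cn.
by apply: connect_trans h _; rewrite (sym_connect_sym hasse_sym).
Qed.

Section AddS.
Variables S P Q : {set T}.
Hypothesis hN : ~ has_induced_N F.
Hypothesis hcomp : forall W, W \in G -> (W \subset S) || (S \subset W).
Hypothesis hP : P \in G.
Hypothesis hPS : P \subset S.
Hypothesis hQ : Q \in G.
Hypothesis hSQ : S \subset Q.

Lemma inc_core Y : Y \in F -> incomparable S Y -> (Y \in Fcore F) && (Y \notin G).
Proof.
move=> hY /andP [n1 n2]; apply/andP; split.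
  rewrite /Fcore !inE hY andbT negb_or; apply/andP; split.
    by apply: contra n2 => /eqP ->; rewrite sub0set.
  by apply: contra n1 => /eqP ->; rewrite subsetT.
by apply/negP => /hcomp; rewrite (negbTE n1) (negbTE n2).
Qed.

Lemma comp_G W : (W \subset S) || (S \subset W) -> W \in Fcore F -> W \in G.
Proof.
move=> /orP [h|h] hW.
  by rewrite (G_comp hW (G_Fcore hQ) (subset_trans h hSQ)).
by rewrite -(G_comp (G_Fcore hP) hW (subset_trans hPS h)).
Qed.

Lemma notcore W : W \in F -> W \notin Fcore F -> (W = set0) \/ (W = setT).
Proof.
move=> hW; rewrite /Fcore !inE hW andbT negbK => /orP [] /eqP ->; by [left|right].
Qed.

Lemma upT Y W : Y \in F -> incomparable S Y -> W \in F ->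
  (W \subset S) || (S \subset W) -> Y \proper W -> W = setT.
Proof.
move=> hY iY hW cW YW; have /andP [cY nG] := inc_core hY iY.
case: (boolP (W \in Fcore F)) => hc.
  have := G_comp cY hc (proper_sub YW); rewrite (comp_G cW hc).
  by move=> e; rewrite e in nG.
case: (notcore hW hc) => // e; subst W.
by move: YW; rewrite properE sub0set andbF.
Qed.

Lemma down0 Y W : Y \in F -> incomparable S Y -> W \in F ->
  (W \subset S) || (S \subset W) -> W \proper Y -> W = set0.
Proof.
move=> hY iY hW cW YW; have /andP [cY nG] := inc_core hY iY.
case: (boolP (W \in Fcore F)) => hc.
  have := G_comp hc cY (proper_sub YW); rewrite (comp_G cW hc).
  by move=> e; rewrite -e in nG.
case: (notcore hW hc) => // e; subst W.
by move: YW; rewrite properE subsetT andbF.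
Qed.

Lemma memF X : X \in S |: F -> X != S -> X \in F.
Proof. by rewrite in_setU1 => /orP [/eqP ->|//]; rewrite eqxx. Qed.

Lemma addS_noN : ~ has_induced_N (S |: F).
Proof.
move=> [a [b [c [d [/and4P [ha hb hc hd] _ /and3P [ac bc bd] /and3P [iab iad icd]]]]]].
case: (eqVneq a S) => [ea|na].
  subst a.
  have hb' : b \in F by apply: (memF hb); rewrite eq_sym (inc_ne iab).
  have hc' : c \in F by apply: (memF hc); rewrite eq_sym (proper_ne ac).
  have hd' : d \in F by apply: (memF hd); rewrite eq_sym (inc_ne iad).
  have cc : (c \subset S) || (S \subset c) by rewrite (proper_sub ac) orbT.
  have e := upT hb' iab hc' cc bc.
  by move: icd; rewrite e /incomparable subsetT andbF.
have ha' := memF ha na.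
case: (eqVneq b S) => [eb|nb].
  subst b.
  have hc' : c \in F by apply: (memF hc); rewrite eq_sym (proper_ne bc).
  have cc : (c \subset S) || (S \subset c) by rewrite (proper_sub bc) orbT.
  have ia : incomparable S a by rewrite inc_sym.
  have e := upT ha' ia hc' cc ac.
  by move: icd; rewrite e /incomparable subsetT andbF.
have hb' := memF hb nb.
case: (eqVneq c S) => [ec|nc].
  subst c.
  have hd' : d \in F by apply: (memF hd); rewrite eq_sym (inc_ne icd).
  have cb : (b \subset S) || (S \subset b) by rewrite (proper_sub bc).
  have e := down0 hd' icd hb' cb bd.
  by move: iab; rewrite e /incomparable sub0set andbF.
have hc' := memF hc nc.
case: (eqVneq d S) => [ed|nd].
  subst d.
  have cb : (b \subset S) || (S \subset b) by rewrite (proper_sub bd).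
  have ic : incomparable S c by rewrite inc_sym.
  have e := down0 hc' ic hb' cb bc.
  by move: iab; rewrite e /incomparable sub0set andbF.
have hd' := memF hd nd.
exact: hN (mkN ha' hb' hc' hd' ac bc bd iab iad icd).
Qed.

End AddS.

Lemma minex k Z : #|Z| <= k -> Z \in G -> exists B, minimal_in G B /\ B \subset Z.
Proof.
elim: k Z => [|k IH] Z hk hZ.
  exists Z; split => //; rewrite /minimal_in hZ /=; apply/forall_inP => C _.
  by apply/negP => /proper_card; lia.
case: (boolP [forall C in G, ~~ (C \proper Z)]) => h.
  by exists Z; rewrite /minimal_in hZ h.
move/forall_inPn: h => [C hC /negbNE hCZ].
have := proper_card hCZ => cc.
have hk' : #|C| <= k by lia.
have [B [hB hBC]] := IH C hk' hC.
by exists B; split => //; apply: subset_trans hBC (proper_sub hCZ).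
Qed.

End Proof.

Theorem lemma2p5 (n : nat) (F G : {set {set 'I_n}}) (M : {set 'I_n}) :
  0 < n ->
  N_saturated F ->
  is_component F G ->
  M \in F ->
  bigcup_min G \subset M -> M \subset bigcap_max G ->
  (forall M', M' \in F -> bigcup_min G \subset M' -> M' \subset bigcap_max G ->
     ~~ (M' \proper M)) ->
  forall X, X \in G -> (X \subset M) || (M \subset X).
Proof.
move=> _ [hN hsat] [X0 hX0 hG] hM hBM hMA hmin X hX.
case: (boolP ((X \subset M) || (M \subset X))) => // hinc; exfalso.
have iXM : incomparable X M by rewrite /incomparable -negb_or.
have inG Y : Y \in G -> Y \in F by move=> hY; apply: Fcore_F; apply: (G_Fcore hX0 hG).
pose L := [set Y in G | (Y \subset M) && [forall Z in G, incomparable Z M ==> (Y \subset Z)]].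
pose S := \bigcup_(Y in L) Y.
have hL Y : Y \in L -> [/\ Y \in G, Y \subset M &
    forall Z, Z \in G -> incomparable Z M -> Y \subset Z].
  rewrite inE => /andP [hY /andP [h1 /forall_inP h2]]; split => // Z hZ iZ.
  exact: (implyP (h2 Z hZ)).
have BM B : minimal_in G B -> B \subset M.
  move=> hB; apply: subset_trans hBM; exact: (bigcup_sup B hB).
have BL B : minimal_in G B -> B \in L.
  move=> hB; have /andP [hBG /forall_inP hBmin] := hB.
  rewrite inE hBG (BM B hB) /=; apply/forall_inP => Z hZ; apply/implyP => iZ.
  case: (boolP (B \subset Z)) => // nBZ; exfalso.
  have [B' [hB' hB'Z]] := minex hX0 (leqnn _) hZ.
  have /andP [hB'G /forall_inP hB'min] := hB'.
  have hB'M := BM B' hB'.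
  move: (iZ) => /andP [nZM nMZ].
  have iBB' : incomparable B B'.
    rewrite /incomparable; apply/andP; split; apply/negP => s.
    - by move/negP: nBZ; apply; apply: subset_trans s hB'Z.
    - have := hBmin B' hB'G; rewrite properE s /= negbK => s2.
      by move/negP: nBZ; apply; apply: subset_trans s2 hB'Z.
  have pBM : B \proper M.
    rewrite properE (BM B hB) /=; apply/negP => s.
    by move/andP: iBB' => [_ /negP]; apply; apply: subset_trans hB'M s.
  have pB'M : B' \proper M.
    rewrite properE hB'M /=; apply/negP => s.
    by move/negP: nMZ; apply; apply: subset_trans s hB'Z.
  have pB'Z : B' \proper Z.
    rewrite properE hB'Z /=; apply/negP => s.
    by move/negP: nZM; apply; apply: subset_trans s hB'M.
  have iBZ : incomparable B Z.
    rewrite /incomparable nBZ /=; apply/negP => s.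
    by move/negP: nZM; apply; apply: subset_trans s (BM B hB).
  apply: hN; apply: (mkN (a:=B) (b:=B') (c:=M) (d:=Z)) => //; try exact: inG.
  by rewrite inc_sym.
have SM : S \subset M by apply/bigcupsP => Y /hL [].
have SX : S \subset X by apply/bigcupsP => Y /hL [_ _ ]; apply.
have [B [hB _]] := minex hX0 (leqnn _) hX.
have hcomp W : W \in G -> (W \subset S) || (S \subset W).
  move=> hW; case: (boolP (incomparable W M)) => iW.
    by rewrite orbC (_ : S \subset W) //; apply/bigcupsP => Y /hL [_ _]; apply.
  move: iW; rewrite /incomparable negb_and !negbK => /orP [WM|MW]; last first.
    by rewrite (subset_trans SM MW) orbT.
  case: (boolP (W \in L)) => WL; first by rewrite (bigcup_sup W WL).
  rewrite orbC (_ : S \subset W) //; apply/bigcupsP => Y YL.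
  have [hY YM YZ] := hL Y YL.
  move: WL; rewrite inE hW WM /= => /forall_inPn [Z hZ]; rewrite negb_imply => /andP [iZ nWZ].
  have YZ' := YZ Z hZ iZ.
  case: (boolP (Y \subset W)) => // nYW; exfalso.
  move: (iZ) => /andP [nZM nMZ].
  have iWY : incomparable W Y.
    rewrite /incomparable nYW andbT; apply/negP => s.
    by move/negP: nWZ; apply; apply: subset_trans s YZ'.
  have pWM : W \proper M.
    rewrite properE WM /=; apply/negP => s.
    by move/negP: nYW; apply; apply: subset_trans YM s.
  have pYM : Y \proper M.
    rewrite properE YM /=; apply/negP => s.
    by move/negP: nMZ; apply; apply: subset_trans s YZ'.
  have pYZ : Y \proper Z.
    rewrite properE YZ' /=; apply/negP => s.
    by move/negP: nZM; apply; apply: subset_trans s YM.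
  have iWZ : incomparable W Z.
    rewrite /incomparable nWZ /=; apply/negP => s.
    by move/negP: nZM; apply; apply: subset_trans s WM.
  apply: hN; apply: (mkN (a:=W) (b:=Y) (c:=M) (d:=Z)) => //; try exact: inG.
  by rewrite inc_sym.
have SF : S \in F.
  apply/negPn/negP => nS.
  apply: (addS_noN hX0 hG hN hcomp (P:=B) (Q:=X)) => //.
  - by case/andP: hB.
  - exact: bigcup_sup (BL B hB).
  - exact: hsat.
have := hmin S SF.
rewrite (_ : bigcup_min G \subset S); last first.
  by apply/bigcupsP => B' hB'; apply: bigcup_sup (BL B' hB').
rewrite (subset_trans SM hMA) properE SM /= => /(_ isT isT); rewrite negbK => s.
case/andP: iXM => _ /negP; apply. exact: (subset_trans s SX).
Qed.
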